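(* Let $d\ge 3$ and let $\rho$ be a full-rank density matrix on $\mathbb{C}^D$ depending on parameters $\theta_1,\dots,\theta_d$; write $\rho_0=\rho$ and $\rho_j=\partial_j\rho$ ($j=1,\dots,d$). Let $S$ be the $d\times d$ matrix with $S_{j,j}=1$ for all $j$, $S_{j,j+1}=i$ for $j=1,\dots,d-1$, $S_{d,1}=i$ if $d$ is not a multiple of $4$ and $S_{d,1}=-i$ if $d$ is a multiple of $4$, and all other entries $0$; let $T=S^{-1}$. For real numbers $\mathbf z=(z_{l,k})_{0\le l\le d,\,1\le k\le d}\in\mathbb R^{d(d+1)}$ and Hermitian $D\times D$ matrices $\xi_1,\dots,\xi_d$ define $$\Gamma_j=\sum_{k=1}^d T_{k,j}\Big(\sum_{l=0}^d z_{l,k}\rho_l+i\xi_k\Big),\qquad j=1,\dots,d.$$ For a binary string $\boldsymbol\alpha\in\{0,1\}^d$ let $\bar{\boldsymbol\alpha}=\boldsymbol\alpha$ if $d$ is not a multiple of $4$, and let $\bar{\boldsymbol\alpha}$ be $\boldsymbol\alpha$ with its last bit flipped if $d$ is a multiple of $4$, and define $$g_{\boldsymbol\alpha}=-\sum_{j=1}^d z_{j,j}-\sum_{j=1}^d\frac{\delta_{0,\bar\alpha_j}\mathrm{Tr}[\Gamma_j\rho^{-1}\Gamma_j^\dagger]+\delta_{1,\bar\alpha_j}\mathrm{Tr}[\Gamma_j^\dagger\rho^{-1}\Gamma_j]}{2}.$$ Then $$C_{\mathsf H}\ \ge\ \max_{\boldsymbol\alpha\in\{0,1\}^d}\ \max_{\mathbf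 z,\xi_1,\dots,\xi_d} g_{\boldsymbol\alpha}.$$
   Context: $\mathrm{Re}(\cdot)$ and $\mathrm{Im}(\cdot)$ of a matrix are taken entrywise, and $\|\cdot\|_1$ is the trace norm. For a $d$-parameter family of density matrices $\rho$ on $\mathbb{C}^D$, the Holevo Cramér–Rao bound with identity weight matrix is $$C_{\mathsf H}=\min\Big\{\mathrm{Tr}[\mathrm{Re}Z(\mathbf X)]+\|\mathrm{Im}Z(\mathbf X)\|_1\Big\},$$ the minimum taken over tuples $\mathbf X=(X_1,\dots,X_d)$ of Hermitian $D\times D$ matrices with $\mathrm{Tr}[\rho X_j]=0$ and $\mathrm{Tr}[\partial_j\rho\,X_k]=\delta_{jk}$, where $Z_{jk}(\mathbf X)=\mathrm{Tr}[\rho X_jX_k]$. The matrix $S$ is invertible (so $T$ exists). *)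

(* Defs.v *)
From HB Require Import structures.
From mathcomp Require Import all_boot all_order all_algebra.
From mathcomp Require Import spectral.
From mathcomp Require Import reals.
From mathcomp.real_closed Require Import complex.
Set Implicit Arguments. Unset Strict Implicit. Unset Printing Implicit Defensive.
Import Order.TTheory GRing.Theory Num.Theory.
Local Open Scope ring_scope.

Section HolevoDefs.
Variable R : realType.
Local Notation C := R[i].

Definition dag m n (A : 'M[C]_(m, n)) : 'M[C]_(n, m) := (map_mx (fun x => x^*) A)^T.

Definition is_hermitian n (A : 'M[C]_n) : Prop := dag A = A.

Definition psd n (A : 'M[C]_n) : Prop :=
  is_hermitian A /\ forall v : 'cV[C]_n, 0 <= (dag v *m A *m v) 0 0.

Definition density n (rho : 'M[C]_n) : Prop := psd rho /\ \tr rho = 1.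

(* trace norm = sum of singular values = sum of sqrt of eigenvalues of A^dag A
   (spectral_diag gives the eigenvalues, with multiplicity, of a normal matrix) *)
Definition tracenorm n (A : 'M[C]_n) : C :=
  \sum_(i < n) sqrtC (spectral_diag (dag A *m A) 0 i).

Definition Zmat d D (rho : 'M[C]_D) (X : 'I_d -> 'M[C]_D) : 'M[C]_d :=
  \matrix_(j < d, k < d) \tr (rho *m X j *m X k).

(* objective of the Holevo bound with identity weight *)
Definition holevo_obj d D (rho : 'M[C]_D) (X : 'I_d -> 'M[C]_D) : C :=
  \tr (map_mx (fun x => 'Re x) (Zmat rho X))
  + tracenorm (map_mx (fun x => 'Im x) (Zmat rho X)).

(* locally unbiased constraints; drho j = partial_j rho *)
Definition feasible d D (rho : 'M[C]_D) (drho : 'I_d -> 'M[C]_D)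
  (X : 'I_d -> 'M[C]_D) : Prop :=
  [/\ forall j, is_hermitian (X j),
      forall j, \tr (rho *m X j) = 0 &
      forall j k, \tr (drho j *m X k) = (j == k)%:R].

(* the matrix S (0-based indices) and T = S^{-1} *)
Definition Smx d : 'M[C]_d :=
  \matrix_(j < d, k < d)
    if j == k then 1
    else if (k : nat) == j.+1 then 'i
    else if ((j : nat) == d.-1) && ((k : nat) == 0%N) then
      (if (4 %| d)%N then - 'i else 'i)
    else 0.

Definition Tmx d : 'M[C]_d := invmx (Smx d).

Definition rho_l d D (rho : 'M[C]_D) (drho : 'I_d -> 'M[C]_D) (l : 'I_d.+1)
  : 'M[C]_D :=
  match unlift ord0 l with Some j => drho j | None => rho end.

Definition Gamma d D (rho : 'M[C]_D) (drho : 'I_d -> 'M[C]_D)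
  (z : 'I_d.+1 -> 'I_d -> R) (xi : 'I_d -> 'M[C]_D) (j : 'I_d) : 'M[C]_D :=
  \sum_(k < d) Tmx d k j *:
     (\sum_(l < d.+1) ((z l k)%:C)%C *: rho_l rho drho l + 'i *: xi k).

Definition alpha_bar d (alpha : 'I_d -> bool) (j : 'I_d) : bool :=
  if (4 %| d)%N && ((j : nat) == d.-1) then ~~ alpha j else alpha j.

Definition g_alpha d D (rho : 'M[C]_D) (drho : 'I_d -> 'M[C]_D)
  (alpha : 'I_d -> bool) (z : 'I_d.+1 -> 'I_d -> R) (xi : 'I_d -> 'M[C]_D) : C :=
  - (\sum_(j < d) ((z (lift ord0 j) j)%:C)%C)
  - \sum_(j < d)
      (if alpha_bar alpha j
       then \tr (dag (Gamma rho drho z xi j) *m invmx rho *m Gamma rho drho z xi j)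
       else \tr (Gamma rho drho z xi j *m invmx rho *m dag (Gamma rho drho z xi j)))
      / 2.

End HolevoDefs.

(* Main.v *)
Require Import Defs.
From HB Require Import structures.
From mathcomp Require Import all_boot all_order all_algebra.
From mathcomp Require Import spectral.
From mathcomp Require Import reals.
From mathcomp.real_closed Require Import complex.
From mathcomp Require Import ring zify.
Import Order.TTheory GRing.Theory Num.Theory.
Local Open Scope ring_scope.
Set Implicit Arguments. Unset Strict Implicit. Unset Printing Implicit Defensive.

Section Helpers.
Variable R : realType.
Local Notation C := R[i].

Lemma dagE m n (A : 'M[C]_(m,n)) i j : dag A i j = (A j i)^*.
Proof. by rewrite /dag !mxE. Qed.

Lemma dagK m n (A : 'M[C]_(m,n)) : dag (dag A) = A.
Proof. by apply/matrixP => i j; rewrite !dagE conjCK. Qed.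

Lemma dag_mul m n p (A : 'M[C]_(m,n)) (B : 'M[C]_(n,p)) :
  dag (A *m B) = dag B *m dag A.
Proof.
apply/matrixP => i j; rewrite dagE !mxE rmorph_sum; apply: eq_bigr => k _.
by rewrite !mxE rmorphM mulrC.
Qed.

Lemma dagD m n (A B : 'M[C]_(m,n)) : dag (A + B) = dag A + dag B.
Proof. by apply/matrixP => i j; rewrite !mxE rmorphD. Qed.

Lemma dagN m n (A : 'M[C]_(m,n)) : dag (- A) = - dag A.
Proof. by apply/matrixP => i j; rewrite !mxE rmorphN. Qed.

Lemma dagZ m n c (A : 'M[C]_(m,n)) : dag (c *: A) = c^* *: dag A.
Proof. by apply/matrixP => i j; rewrite !mxE rmorphM. Qed.

Lemma dag_sum m n I (r : seq I) (P : pred I) (F : I -> 'M[C]_(m,n)) :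
  dag (\sum_(i <- r | P i) F i) = \sum_(i <- r | P i) dag (F i).
Proof.
apply/matrixP => i j; rewrite dagE !summxE rmorph_sum; apply: eq_bigr => k _.
by rewrite !mxE.
Qed.

Lemma dag1 n : dag (1%:M : 'M[C]_n) = 1%:M.
Proof. by apply/matrixP => i j; rewrite !mxE eq_sym rmorph_nat. Qed.

Lemma tr_dag n (A : 'M[C]_n) : \tr (dag A) = (\tr A)^*.
Proof. rewrite /mxtrace rmorph_sum; apply: eq_bigr => i _; by rewrite !mxE. Qed.

Lemma dag_inv n (A : 'M[C]_n) : dag (invmx A) = invmx (dag A).
Proof. by rewrite /dag map_invmx trmx_inv. Qed.


Lemma psd_tr_ge0 m n (P : 'M[C]_n) (Y : 'M[C]_(m, n)) :
  psd P -> 0 <= \tr (Y *m P *m dag Y).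
Proof.
move=> [_ HP]; apply: sumr_ge0 => i _.
have := HP (dag (row i Y)); rewrite dagK.
suff -> : (row i Y *m P *m dag (row i Y)) 0 0 = (Y *m P *m dag Y) i i by [].
rewrite !mxE; apply: eq_bigr => k _; rewrite !mxE; congr (_ * _).
by apply: eq_bigr => l _; rewrite !mxE.
Qed.

Lemma inv_psd n (rho : 'M[C]_n) : psd rho -> rho \in unitmx -> psd (invmx rho).
Proof.
move=> [Hh Hp] Hu; have Hi : is_hermitian (invmx rho).
  by rewrite /is_hermitian dag_inv Hh.
split=> // v; have := Hp (invmx rho *m v).
by rewrite dag_mul Hi -!mulmxA (mulmxA rho) mulmxV // mul1mx.
Qed.

Lemma quad_a n (rho A G : 'M[C]_n) : psd rho -> rho \in unitmx ->
  0 <= \tr (rho *m dag A *m A) + (\tr (A *m G) + (\tr (A *m G))^*)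
       + \tr (dag G *m invmx rho *m G).
Proof.
move=> Hr Hu; have Hh : dag rho = rho by case: Hr.
have := psd_tr_ge0 (A *m rho + dag G) (inv_psd Hr Hu).
rewrite dagD dag_mul dagK Hh !mulmxDl !mulmxDr !mxtraceD.
rewrite -!mulmxA mulKmx // (mulmxA rho) mulmxV // mul1mx.
rewrite -tr_dag dag_mul.
have -> : \tr (A *m (rho *m dag A)) = \tr (rho *m dag A *m A).
  by rewrite mxtrace_mulC.
by rewrite !mulmxA !addrA.
Qed.

Lemma quad_b n (rho A G : 'M[C]_n) : psd rho -> rho \in unitmx ->
  0 <= \tr (rho *m A *m dag A) + (\tr (A *m G) + (\tr (A *m G))^*)
       + \tr (G *m invmx rho *m dag G).
Proof.
move=> Hr Hu; have Hh : dag rho = rho by case: Hr.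
have := psd_tr_ge0 (dag A *m rho + G) (inv_psd Hr Hu).
rewrite dagD dag_mul dagK Hh !mulmxDl !mulmxDr !mxtraceD.
rewrite -!mulmxA mulKmx // (mulmxA rho) mulmxV // mul1mx.
rewrite -tr_dag dag_mul.
have -> : \tr (dag A *m (rho *m A)) = \tr (rho *m A *m dag A).
  by rewrite mxtrace_mulC.
rewrite (mxtrace_mulC G A).
rewrite (mxtrace_mulC (dag A)) !mulmxA => H; apply: le_trans H _.
by rewrite le_eqVlt; apply/orP; left; apply/eqP; ring.
Qed.


Lemma cM (a b : C) : (a * b)^* = a^* * b^*.
Proof. exact: rmorphM. Qed.
Lemma cB (a b : C) : (a - b)^* = a^* - b^*.
Proof. exact: rmorphB. Qed.
Lemma cD (a b : C) : (a + b)^* = a^* + b^*.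
Proof. exact: rmorphD. Qed.

Lemma cs_scalar n (x y : 'I_n -> C) l :
  \sum_k (x k)^* * x k = 1 -> \sum_k (y k)^* * y k = l ->
  (\sum_k (x k)^* * y k) + (\sum_k (x k)^* * y k)^* <= 2 * sqrtC l.
Proof.
move=> Hx Hy.
have yge0 : forall k, 0 <= (y k)^* * y k by move=> k; rewrite mulrC mul_conjC_ge0.
have l0 : 0 <= l by rewrite -Hy; apply: sumr_ge0 => k _.
set s := sqrtC l; set c := \sum_k (x k)^* * y k.
have s0 : 0 <= s by rewrite sqrtC_ge0.
have sc : s^* = s by rewrite geC0_conj.
have ss : s * s = l by rewrite -expr2 sqrtCK.
have key : 0 <= \sum_k (s * x k - y k)^* * (s * x k - y k).
  by apply: sumr_ge0 => k _; rewrite mulrC mul_conjC_ge0.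
have E : \sum_k (s * x k - y k)^* * (s * x k - y k) =
    s * s * (\sum_k (x k)^* * x k) - s * c - s * c^* + \sum_k (y k)^* * y k.
  rewrite /c rmorph_sum !mulr_sumr -!sumrB -big_split /=.
  apply: eq_bigr => k _; rewrite cB !cM sc conjCK; ring.
rewrite E Hx Hy mulr1 -ss in key.
have [s_eq0|s_neq0] := eqVneq s 0.
  have l_eq0 : l = 0 by rewrite -ss s_eq0 mulr0.
  have y0 : forall k, y k = 0.
    move=> k; have := @psumr_eq0P _ _ _ _ (fun k _ => yge0 k) (etrans Hy l_eq0) k isT.
    by move/eqP; rewrite mulf_eq0 conjC_eq0 orbb => /eqP.
  have -> : c = 0 by rewrite /c big1 // => k _; rewrite y0 mulr0.
  by rewrite rmorph0 addr0 s_eq0 mulr0.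
have s_gt0 : 0 < s by rewrite lt0r s_neq0 s0.
have : 0 <= s * (2 * s - (c + c^*)).
  suff -> : s * (2 * s - (c + c^*)) = s * s - s * c - s * c^* + s * s by [].
  ring.
by rewrite pmulr_rge0 // subr_ge0.
Qed.


Lemma tstar m n (A : 'M[C]_(m,n)) : map_mx (@Num.conj C) (A^T) = dag A.
Proof. by apply/matrixP => i j; rewrite !mxE. Qed.

Lemma holder n (B V : 'M[C]_n) : V *m dag V = 1%:M ->
  \tr (V *m B) + (\tr (V *m B))^* <= 2 * tracenorm B.
Proof.
move=> HV.
set M := dag B *m B.
have Mn : M \is normalmx by apply/normalmxP; rewrite tstar /M dag_mul dagK.
have /orthomx_spectralP HM := Mn.
have /unitarymxP := spectral_unitarymx M.
have invP := invmx_unitary (spectral_unitarymx M).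
rewrite tstar in invP; rewrite tstar.
rewrite /tracenorm -/M.
move: HM invP; set P := spectralmx M; set lam := spectral_diag M => HM invP PU.
set U := dag P in PU invP.
have UP : U *m P = 1%:M by apply: mulmx1C.
set Xm := dag V *m U; set Y := B *m U.
have trE : \tr (V *m B) = \tr (dag Xm *m Y).
  rewrite /Xm /Y dag_mul /U !dagK !mulmxA (mxtrace_mulC _ (dag P)) !mulmxA.
  by rewrite -/U UP mul1mx.
have YY : dag Y *m Y = diag_mx lam.
  rewrite /Y dag_mul /U dagK -/U mulmxA -(mulmxA P) -/M HM invP.
  by rewrite !mulmxA PU mul1mx -mulmxA PU mulmx1.
have XX : dag Xm *m Xm = 1%:M.
  by rewrite /Xm dag_mul /U dagK -/U dagK mulmxA -(mulmxA P) HV mulmx1 PU.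
rewrite trE.
have -> : \tr (dag Xm *m Y) = \sum_i \sum_k (Xm k i)^* * Y k i.
  by apply: eq_bigr => i _; rewrite !mxE; apply: eq_bigr => k _; rewrite !mxE.
rewrite rmorph_sum -big_split mulr_sumr; apply: ler_sum => i _.
apply: cs_scalar.
  have /matrixP/(_ i i) := XX; rewrite !mxE eqxx /= => H; apply: etrans _ H.
  by apply: eq_bigr => k _; rewrite !mxE.
have /matrixP/(_ i i) := YY; rewrite !mxE eqxx mulr1n => H; apply: etrans _ H.
by apply: eq_bigr => k _; rewrite !mxE.
Qed.

End Helpers.

Section H2.
Variable R : realType.
Local Notation C := R[i].

Definition sgn d (j : 'I_d) : C := if (4 %| d)%N && ((j:nat) == d.-1) then -1 else 1.
Definition Nmx d : 'M[C]_d := \matrix_(j, k) if k == ordS j then sgn j else 0.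

Lemma Smx_N d : (2 <= d)%N -> Smx R d = 1%:M + 'i *: Nmx d.
Proof.
move=> d2; apply/matrixP => j k; rewrite !mxE /sgn -!val_eqE /=.
have := ltn_ord j; have := ltn_ord k.
move=> hk hj.
have hm : ((j.+1 %% d = j.+1)%N /\ (j.+1 < d)%N) \/ ((j.+1 %% d = 0)%N /\ j.+1 = d).
  case: (ltnP j.+1 d) => h; [left | right].
    by rewrite modn_small.
  have e : j.+1 = d by lia.
  by rewrite e modnn.
case: (4 %| d)%N => /=; repeat (case: eqP => /= ?); try (exfalso; lia);
  rewrite ?mulr0 ?mulr1 ?addr0 ?add0r ?mulrN1 ?mulr1n ?mulr0n //.
Qed.


Lemma sgn2 d (j : 'I_d) : sgn j * sgn j = 1.
Proof. by rewrite /sgn; case: ifP; rewrite ?mulrNN mulr1. Qed.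

Lemma sgn_conj d (j : 'I_d) : (sgn j)^* = sgn j.
Proof. by rewrite /sgn; case: ifP; rewrite ?conjCN1 ?conjC1. Qed.

Lemma N_real d : map_mx (@Num.conj C) (Nmx d) = Nmx d.
Proof. by apply/matrixP => j k; rewrite !mxE; case: ifP; rewrite ?sgn_conj ?conjC0. Qed.

Lemma dagN_tr d : dag (Nmx d) = (Nmx d)^T.
Proof. by rewrite /dag N_real. Qed.

Lemma NNt d : Nmx d *m (Nmx d)^T = 1%:M.
Proof.
apply/matrixP => j l; rewrite !mxE (bigD1 (ordS j)) //= big1 ?addr0.
  rewrite !mxE eqxx (inj_eq (can_inj (@ordSK d))).
  by case: (eqVneq j l) => [<-|]; rewrite ?sgn2 ?mulr0.
by move=> k /negbTE hk; rewrite !mxE hk mul0r.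
Qed.

Lemma NtN d : (Nmx d)^T *m Nmx d = 1%:M.
Proof. exact: mulmx1C (NNt d). Qed.

Lemma vN_entry d (v : 'rV[C]_d) k : (v *m Nmx d) 0 k = v 0 (ord_pred k) * sgn (ord_pred k).
Proof.
rewrite !mxE (bigD1 (ord_pred k)) //= big1 ?addr0.
  by rewrite !mxE ord_predK eqxx.
move=> j hj; rewrite !mxE; case: eqP => [e|]; last by rewrite mulr0.
by move: hj; rewrite e ordSK eqxx.
Qed.


Lemma two_neq0 : (2 : C) != 0.
Proof. by rewrite pnatr_eq0. Qed.

Lemma N1_neq1 : (-1 : C) != 1.
Proof.
apply/eqP => h; have h' : (1 : C) = -1 by rewrite h.
have : (1 : C) *+ 2 == 0 by rewrite mulr2n {1}h' addNr.
by rewrite pnatr_eq0.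
Qed.

Lemma i_neq1 : ('i : C) != 1.
Proof.
apply/eqP => h; have := sqrCi C; rewrite h expr1n => /eqP.
by rewrite eq_sym (negbTE N1_neq1).
Qed.

Lemma Ni_neq1 : (- 'i : C) != 1.
Proof.
apply/eqP => h; have := sqrCi C; rewrite -sqrrN h expr1n => /eqP.
by rewrite eq_sym (negbTE N1_neq1).
Qed.

Lemma Ni4 : (- 'i : C) ^+ 4 = 1.
Proof. by rewrite (exprM _ 2 2) sqrrN sqrCi sqrrN expr1n. Qed.

Lemma c_neq1 m : (if (4 %| m)%N then -1 else 1) * (- 'i : C) ^+ m != 1.
Proof.
rewrite {2}(divn_eq m 4) exprD mulnC exprM Ni4 expr1n mul1r /dvdn.
have : (m %% 4 < 4)%N by rewrite ltn_pmod.
case: (m %% 4)%N => [|[|[|[|r]]]] //= _.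
- by rewrite expr0 mulr1 N1_neq1.
- by rewrite mul1r expr1 Ni_neq1.
- by rewrite mul1r sqrrN sqrCi N1_neq1.
- by rewrite mul1r exprS sqrrN sqrCi mulrN1 opprK i_neq1.
Qed.

Lemma ord_pred_inordS d' n : (n.+1 < d'.+1)%N ->
  ord_pred (inord n.+1 : 'I_d'.+1) = inord n.
Proof.
move=> h; apply: val_inj; rewrite /= !inordK ?addSn //=; last by lia.
by rewrite modnDr modn_small //; lia.
Qed.

Lemma ord_pred0 d' : ord_pred (ord0 : 'I_d'.+1) = ord_max.
Proof. by apply: val_inj; rewrite /= modn_small. Qed.

Lemma S_unit d : (2 <= d)%N -> Smx R d \in unitmx.
Proof.
case: d => [|d'] // d2.
rewrite unitmxE unitfE; apply/det0P => -[v v0 vS].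
have Ek : forall k, v 0 k = - 'i * sgn (ord_pred k) * v 0 (ord_pred k).
  move=> k; have /rowP/(_ k) := vS; rewrite Smx_N // mulmxDr mulmx1 -scalemxAr.
  have := vN_entry v k; rewrite !mxE => ->; move/eqP; rewrite addr_eq0 => /eqP ->.
  ring.
have step : forall n, (n.+1 < d'.+1)%N -> v 0 (inord n.+1) = - 'i * v 0 (inord n).
  move=> n h; rewrite Ek ord_pred_inordS // /sgn inordK; last by lia.
  have -> : (n == d'.+1.-1) = false by apply/eqP; lia.
  by rewrite andbF mulr1.
have pw : forall n, (n < d'.+1)%N -> v 0 (inord n) = (- 'i) ^+ n * v 0 ord0.
  elim => [|n IH] h.
    by rewrite expr0 mul1r; congr (v 0 _); apply: val_inj; rewrite /= inordK.
  by rewrite step // IH ?exprS ?mulrA //; lia.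
have h0 := Ek ord0; rewrite ord_pred0 in h0.
have e : (ord_max : 'I_d'.+1) = inord d' by apply: val_inj; rewrite /= inordK.
rewrite {2}e pw // /sgn /= eqxx andbT in h0.
have v00 : v 0 ord0 = 0.
  move: h0; set c := (if _ then _ else _) => h0.
  have : (1 - c * (- 'i) ^+ d'.+1) * v 0 ord0 = 0.
    rewrite exprS mulrBl mul1r {1}h0; ring.
  move/eqP; rewrite mulf_eq0 subr_eq0 eq_sym (negbTE (c_neq1 _)) /=.
  by move/eqP.
move/eqP: v0; apply; apply/rowP => k; rewrite mxE.
by rewrite -(inord_val k) pw // v00 mulr0.
Qed.

End H2.

Section H3.
Variable R : realType.
Local Notation C := R[i].

Lemma realC_conj (x : R) : ((x%:C)%C : C)^* = (x%:C)%C.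
Proof. exact: conjc_real. Qed.

Lemma tr_sym_anti n (A W : 'M[C]_n) : A^T = A -> W^T = - W -> \tr (A *m W) = 0.
Proof.
move=> hA hW; have e : \tr (A *m W) = - \tr (A *m W).
  rewrite -[in LHS]mxtrace_tr trmx_mul hA hW mxtrace_mulC mulmxN; exact: raddfN.
have : \tr (A *m W) *+ 2 == 0 by rewrite mulr2n {2}e subrr.
by rewrite -mulr_natr mulf_eq0 pnatr_eq0 orbF => /eqP.
Qed.

Variables (d D : nat) (rho : 'M[C]_D) (X : 'I_d -> 'M[C]_D).
Hypothesis HXh : forall j, is_hermitian (X j).
Hypothesis Hrh : is_hermitian rho.
Local Notation Z := (Zmat rho X).

Lemma Z_conj k m : (Z k m)^* = Z m k.
Proof.
rewrite !mxE -tr_dag !dag_mul HXh Hrh.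
by rewrite !HXh mulmxA mxtrace_mulC mulmxA.
Qed.

Lemma dag_comb (a : 'I_d -> C) : dag (\sum_k a k *: X k) = \sum_k (a k)^* *: X k.
Proof. by rewrite dag_sum; apply: eq_bigr => k _; rewrite dagZ HXh. Qed.

Lemma tr_bilin (a b : 'I_d -> C) :
  \tr (rho *m (\sum_k a k *: X k) *m (\sum_m b m *: X m)) =
  \sum_k \sum_m a k * b m * Z k m.
Proof.
rewrite mulmx_sumr raddf_sum [RHS]exchange_big; apply: eq_bigr => m _.
rewrite mulmx_sumr mulmx_suml raddf_sum; apply: eq_bigr => k _.
rewrite /= -!scalemxAr -scalemxAl !mxtraceZ mxE; ring.
Qed.

Lemma Q1E (S : 'M[C]_d) j :
  \tr (rho *m dag (\sum_k S j k *: X k) *m (\sum_k S j k *: X k)) =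
  (map_mx (@Num.conj C) S *m Z *m S^T) j j.
Proof.
rewrite dag_comb tr_bilin mxE; rewrite exchange_big; apply: eq_bigr => m _.
rewrite !mxE mulr_suml; apply: eq_bigr => k _; rewrite !mxE; ring.
Qed.

Lemma Q2E (S : 'M[C]_d) j :
  \tr (rho *m (\sum_k S j k *: X k) *m dag (\sum_k S j k *: X k)) =
  (S *m Z *m dag S) j j.
Proof.
rewrite dag_comb tr_bilin mxE; rewrite exchange_big; apply: eq_bigr => m _.
rewrite !mxE mulr_suml; apply: eq_bigr => k _; rewrite !mxE; ring.
Qed.

Definition Rz := map_mx (fun x => 'Re x) Z.
Definition Bz := map_mx (fun x => 'Im x) Z.

Lemma Zrect : Z = Rz + 'i *: Bz.
Proof. by apply/matrixP => a b; rewrite !mxE -Crect. Qed.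

Lemma Rz_sym : Rz^T = Rz.
Proof.
apply/matrixP => a b; have := Z_conj b a; rewrite !mxE => <-.
by rewrite Re_conj.
Qed.

Lemma trBz : \tr Bz = 0.
Proof.
rewrite /mxtrace big1 // => j _; have := Z_conj j j; rewrite !mxE ImE => ->.
by rewrite subrr mulr0 mul0r.
Qed.

Lemma Bz_real : map_mx (@Num.conj C) Bz = Bz.
Proof. by apply/matrixP => a b; rewrite !mxE conj_Creal // Creal_Im. Qed.

Lemma trZ_decomp (W : 'M[C]_d) : W^T = - W ->
  2 * \tr Z + 'i * \tr (Z *m W) = 2 * \tr Rz - \tr (Bz *m W).
Proof.
move=> hW; rewrite Zrect raddfD /= mxtraceZ trBz mulr0 addr0.
rewrite mulmxDl raddfD /= -scalemxAl mxtraceZ (tr_sym_anti Rz_sym hW).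
rewrite add0r mulrA -expr2 sqrCi; ring.
Qed.

End H3.

Section H4.
Variable R : realType.
Local Notation C := R[i].

Lemma sum_choice n (b : 'I_n -> bool) (M0 M1 : 'M[C]_n) :
  \sum_j (if b j then (M0 + M1) j j else (M0 - M1) j j) =
  \tr M0 + \tr (diag_mx (\row_j (if b j then 1 else -1)) *m M1).
Proof.
rewrite /mxtrace -big_split; apply: eq_bigr => j _.
rewrite mul_diag_mx !mxE /=; case: (b j); rewrite ?mul1r ?mulN1r //.
Qed.

Variable d : nat.
Hypothesis d2 : (2 <= d)%N.
Local Notation N := (Nmx R d).
Local Notation S := (Smx R d).
Definition P := 'i *: N.

Lemma S_P : S = 1%:M + P.
Proof. exact: Smx_N. Qed.

Lemma Sbar_P : map_mx (@Num.conj C) S = 1%:M - P.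
Proof.
rewrite S_P /P; apply/matrixP => a b.
have /matrixP/(_ a b) := N_real R d; rewrite !mxE => hN.
by rewrite cD cM conjCi rmorph_nat hN; ring.
Qed.

Lemma trP : P^T = 'i *: N^T.
Proof. by apply/matrixP => a b; rewrite !mxE. Qed.

Lemma ST_P : S^T = 1%:M + P^T.
Proof. by rewrite S_P; apply/matrixP => a b; rewrite !mxE eq_sym. Qed.

Lemma Sdag_P : dag S = 1%:M - P^T.
Proof. by rewrite /dag Sbar_P; apply/matrixP => a b; rewrite !mxE eq_sym. Qed.

Lemma Q1mat (Zg : 'M[C]_d) : map_mx (@Num.conj C) S *m Zg *m S^T =
  (Zg - P *m Zg *m P^T) + (Zg *m P^T - P *m Zg).
Proof.
rewrite Sbar_P ST_P !(mulmxBl, mulmxBr, mulmxDl, mulmxDr, mul1mx, mulmx1).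
apply/matrixP => a b; rewrite !mxE; ring.
Qed.

Lemma Q2mat (Zg : 'M[C]_d) : S *m Zg *m dag S =
  (Zg - P *m Zg *m P^T) - (Zg *m P^T - P *m Zg).
Proof.
rewrite Sdag_P S_P !(mulmxBl, mulmxBr, mulmxDl, mulmxDr, mul1mx, mulmx1).
apply/matrixP => a b; rewrite !mxE; ring.
Qed.


Lemma PtP : P^T *m P = - 1%:M.
Proof.
by rewrite trP /P -scalemxAl -scalemxAr scalerA -expr2 sqrCi NtN scaleN1r.
Qed.

Lemma trM0 (Zg : 'M[C]_d) : \tr (Zg - P *m Zg *m P^T) = 2 * \tr Zg.
Proof.
rewrite raddfB /= mxtrace_mulC mulmxA PtP mulNmx mul1mx raddfN /=.
by rewrite opprK mulr2n mulrDl mul1r.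
Qed.

Variable b : 'I_d -> bool.
Definition Eb : 'M[C]_d := diag_mx (\row_j (if b j then 1 else -1)).
Definition W := N^T *m Eb - Eb *m N.

Lemma trEM1 (Zg : 'M[C]_d) :
  \tr (Eb *m (Zg *m P^T - P *m Zg)) = 'i * \tr (Zg *m W).
Proof.
rewrite mulmxBr raddfB /= trP /P.
have -> : \tr (Eb *m (Zg *m ('i *: N^T))) = 'i * \tr (Zg *m N^T *m Eb).
  by rewrite -!scalemxAr mxtraceZ mxtrace_mulC.
have -> : \tr (Eb *m ('i *: N *m Zg)) = 'i * \tr (Zg *m (Eb *m N)).
  by rewrite -scalemxAl -scalemxAr mxtraceZ [in LHS]mulmxA mxtrace_mulC.
by rewrite /W -mulrBr -raddfB /= -mulmxA -mulmxBr.
Qed.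

Lemma Eb_tr : Eb^T = Eb.
Proof. exact: tr_diag_mx. Qed.

Lemma Eb_dag : dag Eb = Eb.
Proof.
apply/matrixP => i j; rewrite !mxE eq_sym; case: (eqVneq i j) => [->|ne].
  by rewrite !mulr1n; case: (b j); rewrite ?conjC1 ?conjCN1.
by rewrite !mulr0n conjC0.
Qed.

Lemma EbEb : Eb *m Eb = 1%:M.
Proof.
apply/matrixP => i j; rewrite mul_diag_mx !mxE; case: eqP => [->|_].
  by case: (b j); rewrite ?mulr1n ?mulr1 ?mulrNN ?mulr1.
by rewrite !mulr0n mulr0.
Qed.

Lemma dagNt : dag (N^T) = N.
Proof. by rewrite -dagN_tr dagK. Qed.

Lemma W_anti : W^T = - W.
Proof.
rewrite /W raddfB /= !trmx_mul trmxK Eb_tr opprB //.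
Qed.

Lemma W_dag : dag W = - W.
Proof.
by rewrite /W dagD dagN !dag_mul Eb_dag dagNt dagN_tr opprB addrC.
Qed.

Lemma sumQ_gen (Zg : 'M[C]_d) (Qf : 'I_d -> C) :
  (forall j, Qf j = if b j then (map_mx (@Num.conj C) S *m Zg *m S^T) j j
                    else (S *m Zg *m dag S) j j) ->
  \sum_j Qf j = 2 * \tr Zg + 'i * \tr (Zg *m W).
Proof.
move=> hQ; under eq_bigr => j _ do rewrite hQ Q1mat Q2mat.
by rewrite sum_choice -/Eb trM0 trEM1.
Qed.

Lemma holderW (B : 'M[C]_d) : map_mx (@Num.conj C) B = B ->
  0 <= 2 * tracenorm B + \tr (B *m W).
Proof.
move=> Br.
have dB : dag B = B^T by rewrite /dag Br.
set t := \tr (B *m W).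
have tc : t^* = t.
  rewrite /t -tr_dag dag_mul W_dag dB -mxtrace_tr trmx_mul trmxK.
  by rewrite linearN /= W_anti opprK.
set V1 := Eb *m N.
set V2 := - (N^T *m Eb).
have hV1 : V1 *m dag V1 = 1%:M.
  by rewrite /V1 dag_mul Eb_dag dagN_tr !mulmxA -(mulmxA Eb) NNt mulmx1 EbEb.
have hV2 : V2 *m dag V2 = 1%:M.
  rewrite /V2 dagN dag_mul Eb_dag dagNt mulNmx mulmxN opprK.
  by rewrite -mulmxA (mulmxA Eb) EbEb mul1mx NtN.
have h1 := holder B hV1; have h2 := holder B hV2.
set t1 := \tr (V1 *m B) in h1; set t2 := \tr (V2 *m B) in h2.
have e12 : t1 + t2 = - t.
  rewrite /t1 /t2 /t /V1 /V2 /W mulNmx raddfN /= mulmxBr raddfB /= opprB.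
  by rewrite mxtrace_mulC (mxtrace_mulC _ B) !mulmxA addrC.
have ec : t1^* + t2^* = - t by rewrite -cD e12 -{2}tc; apply: rmorphN.
have := lerD h1 h2; rewrite addrACA e12 ec -subr_ge0.
have -> : 2 * tracenorm B + 2 * tracenorm B - (- t + - t) =
  2 * (2 * tracenorm B + t) by ring.
by rewrite pmulr_rge0 // ltr0n.
Qed.

End H4.

Section H5.
Variable R : realType.
Local Notation C := R[i].

Lemma triple_sum d (S T : 'M[C]_d) (F : 'I_d -> 'I_d -> C) : T *m S = 1%:M ->
  \sum_j \sum_k \sum_m S j k * T m j * F k m = \sum_k F k k.
Proof.
move=> TS; rewrite exchange_big; apply: eq_bigr => k _.
rewrite exchange_big (bigD1 k) //= [X in _ + X = _]big1 ?addr0.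
  have /matrixP/(_ k k) := TS; rewrite !mxE eqxx /= => h.
  have e : \sum_j S j k * T k j = 1 := etrans (eq_bigr _ (fun j _ => mulrC _ _)) h.
  by rewrite -mulr_suml e mul1r.
move=> m hm; have /matrixP/(_ m k) := TS; rewrite !mxE (negbTE hm) /= => h.
have e : \sum_j S j k * T m j = 0 := etrans (eq_bigr _ (fun j _ => mulrC _ _)) h.
by rewrite -mulr_suml e mul0r.
Qed.

Lemma tr_AG d D (S T : 'M[C]_d) (X Gm : 'I_d -> 'M[C]_D) : T *m S = 1%:M ->
  \sum_j \tr ((\sum_k S j k *: X k) *m (\sum_k T k j *: Gm k)) =
  \sum_k \tr (X k *m Gm k).
Proof.
move=> TS; rewrite -(triple_sum (fun k m => \tr (X k *m Gm m)) TS).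
apply: eq_bigr => j _; rewrite mulmx_suml raddf_sum; apply: eq_bigr => k _.
rewrite mulmx_sumr raddf_sum; apply: eq_bigr => m _.
by rewrite /= -scalemxAl -scalemxAr !mxtraceZ mulrA.
Qed.


Lemma trXG d D (rho : 'M[C]_D) (drho X xi : 'I_d -> 'M[C]_D) (z : 'I_d.+1 -> 'I_d -> R) k :
  (forall j, \tr (rho *m X j) = 0) ->
  (forall j k, \tr (drho j *m X k) = (j == k)%:R) ->
  \tr (X k *m (\sum_(l < d.+1) ((z l k)%:C)%C *: rho_l rho drho l + 'i *: xi k)) =
  ((z (lift ord0 k) k)%:C)%C + 'i * \tr (X k *m xi k).
Proof.
move=> h0 h1; rewrite mulmxDr raddfD /= mulmx_sumr raddf_sum /= big_ord_recl /=.
rewrite -scalemxAr mxtraceZ; congr (_ + _).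
rewrite /rho_l unlift_none mxtrace_mulC h0 mulr0 add0r.
rewrite (bigD1 k) //= big1 ?addr0.
  by rewrite (@liftK _ ord0 k) -scalemxAr mxtraceZ mxtrace_mulC h1 eqxx mulr1.
move=> j hj; rewrite (@liftK _ ord0 j) -scalemxAr mxtraceZ mxtrace_mulC h1.
  by rewrite (negbTE hj) mulr0.
by rewrite -scalemxAr mxtraceZ.
Qed.


Lemma sum_cc d D (rho : 'M[C]_D) (drho X xi : 'I_d -> 'M[C]_D) (z : 'I_d.+1 -> 'I_d -> R)
  (S : 'M[C]_d) :
  Tmx R d *m S = 1%:M ->
  (forall j, \tr (rho *m X j) = 0) ->
  (forall j k, \tr (drho j *m X k) = (j == k)%:R) ->
  (forall j, is_hermitian (X j)) -> (forall j, is_hermitian (xi j)) ->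
  \sum_j \tr ((\sum_k S j k *: X k) *m Gamma rho drho z xi j) +
  \sum_j (\tr ((\sum_k S j k *: X k) *m Gamma rho drho z xi j))^* =
  2 * \sum_k ((z (lift ord0 k) k)%:C)%C.
Proof.
move=> TS h0 h1 HXh Hxi.
have -> : \sum_j (\tr ((\sum_k S j k *: X k) *m Gamma rho drho z xi j))^* =
  (\sum_j \tr ((\sum_k S j k *: X k) *m Gamma rho drho z xi j))^*.
  by rewrite rmorph_sum.
rewrite /Gamma (tr_AG _ _ TS).
under eq_bigr => k _ do rewrite (trXG xi z k h0 h1).
rewrite rmorph_sum -big_split mulr_sumr; apply: eq_bigr => k _ /=.
have rc : (\tr (X k *m xi k))^* = \tr (X k *m xi k).
  by rewrite -tr_dag dag_mul HXh Hxi mxtrace_mulC.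
rewrite cD cM conjCi rc realC_conj; ring.
Qed.

End H5.

Unset Implicit Arguments. Set Strict Implicit.

Theorem theorem2 (R : realType) (d D : nat) (hd : (3 <= d)%N)
  (rho : 'M[R[i]]_D) (drho : 'I_d -> 'M[R[i]]_D)
  (Hrho : density rho) (Hfull : rho \in unitmx)
  (Hdrho : forall j, is_hermitian (drho j)) (Htrd : forall j, \tr (drho j) = 0)
  (alpha : 'I_d -> bool) (z : 'I_d.+1 -> 'I_d -> R)
  (xi : 'I_d -> 'M[R[i]]_D) (Hxi : forall k, is_hermitian (xi k))
  (X : 'I_d -> 'M[R[i]]_D) (HX : feasible rho drho X) :
  g_alpha rho drho alpha z xi <= holevo_obj rho X.
Proof.
have d2 : (2 <= d)%N by apply: ltnW.
case: Hrho => Hpsd _.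
have Hrh : is_hermitian rho by case: Hpsd.
case: HX => HXh HX0 HX1.
set S := Smx R d.
have TS : Tmx R d *m S = 1%:M by rewrite /Tmx mulVmx // S_unit.
set A := fun j => \sum_k S j k *: X k.
set Gam := Gamma rho drho z xi.
set ab := alpha_bar alpha.
set q := fun j => if ab j then \tr (dag (Gam j) *m invmx rho *m Gam j)
                  else \tr (Gam j *m invmx rho *m dag (Gam j)).
set Q := fun j => if ab j then \tr (rho *m dag (A j) *m A j)
                  else \tr (rho *m A j *m dag (A j)).
set cj := fun j => \tr (A j *m Gam j).
have hj : forall j, 0 <= Q j + (cj j + (cj j)^*) + q j.
  move=> j; rewrite /Q /q /cj; case: (ab j); [exact: quad_a | exact: quad_b].
have hsum : 0 <= \sum_j (Q j + (cj j + (cj j)^*) + q j).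
  by apply: sumr_ge0 => j _; exact: hj.
rewrite !big_split /= in hsum.
have sumQ : \sum_j Q j = 2 * \tr (Rz rho X) - \tr (Bz rho X *m W R ab).
  rewrite -(trZ_decomp HXh Hrh (W_anti R ab)).
  apply: (sumQ_gen d2) => j; rewrite /Q /A; case: (ab j).
    exact: Q1E.
  exact: Q2E.
have sumc : \sum_j cj j + \sum_j (cj j)^* = 2 * \sum_k ((z (lift ord0 k) k)%:C)%C.
  rewrite /cj /A /Gam. exact: (sum_cc z TS HX0 HX1 HXh Hxi).
have hol := holderW ab (Bz_real rho X).
rewrite sumQ sumc in hsum.
have gE : g_alpha rho drho alpha z xi =
    - \sum_k ((z (lift ord0 k) k)%:C)%C - (\sum_j q j) / 2.
  by rewrite /g_alpha mulr_suml.
have hE : holevo_obj rho X = \tr (Rz rho X) + tracenorm (Bz rho X) by [].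
rewrite gE hE -subr_ge0.
move: hsum hol.
set t := \tr (Bz rho X *m W R ab).
set tn := tracenorm (Bz rho X).
set sz := \sum_k ((z (lift ord0 k) k)%:C)%C.
set sq := \sum_j q j.
set tr := \tr (Rz rho X).
move=> hsum hol.
have -> : tr + tn - (- sz - sq / 2) =
    2^-1 * (2 * tr - t + 2 * sz + sq) + 2^-1 * (2 * tn + t).
  by field.
by apply: addr_ge0; apply: mulr_ge0 => //; rewrite invr_ge0 ler0n.
Qed.
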